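(* Let $T=(T_a,T_b)$ be a rooted binary tree on $n$ leaves with minimal Colless index, where $T_a,T_b$ have $n_a\geq n_b$ leaves. Let $T_n^{gfb}=(T_a^{gfb},T_b^{gfb})$ with $n_a^{gfb}\geq n_b^{gfb}$ leaves and $T_n^{mb}=(T_a^{mb},T_b^{mb})$ with $n_a^{mb}\geq n_b^{mb}$ leaves. Then $$n_a^{gfb}\geq n_a\geq n_a^{mb}\quad\text{and}\quad n_b^{gfb}\leq n_b\leq n_b^{mb}.$$
   Context: A rooted binary tree with $n\geq 2$ leaves is a rooted tree whose root has degree 2 and all other internal nodes have degree 3; for $n=1$ it is a single node. Trees are up to isomorphism. $T=(T_a,T_b)$ denotes the decomposition into the subtrees rooted at the children of the root. For an internal node $v$ with children $v_1,v_2$, let $\kappa(v_i)$ be the number of leaves descending from $v_i$ ($1$ if a leaf) and $bal(v)=|\kappa(v_1)-\kappa(v_2)|$. The Colless index is $\mathcal{C}(T)=\sum_v bal(v)$ over internal nodes; minimal means minimal among rooted binary trees with $n$ leaves. $T_n^{mb}$ is the unique tree with $n$ leaves having $bal(v)\leq1$ at every internal node (maximally balanced tree). The GFB tree $T_n^{gfb}$ is the output of: start with $n$ single-node trees; while more than one tree remains, remove a tree $u$ of minimal size (number of leaves), then remove a tree $v$ of minimal size among the remaining ones, and insert the tree with a new root whose children are the roots of $u$ and $v$; output the remaining tree. *)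

(* Defs.v *)
From mathcomp Require Import all_boot.
From Stdlib Require Import Permutation.
Set Implicit Arguments. Unset Strict Implicit. Unset Printing Implicit Defensive.

(* Rooted binary trees (unlabelled; isomorphism is irrelevant since every
   quantity below is an isomorphism invariant). Node l r = tree whose root
   has children the roots of l and r. *)
Inductive tree : Type := Leaf | Node of tree & tree.

Fixpoint leaves (t : tree) : nat :=
  match t with Leaf => 1 | Node l r => leaves l + leaves r end.

Definition bal (l r : tree) : nat := (leaves l - leaves r) + (leaves r - leaves l).

Fixpoint colless (t : tree) : nat :=
  match t with Leaf => 0 | Node l r => colless l + colless r + bal l r end.

Definition colless_minimal (t : tree) : Prop :=
  forall t' : tree, leaves t' = leaves t -> colless t <= colless t'.

(* bal(v) <= 1 at every internal node: characterizes T_n^mb *)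
Fixpoint max_balanced (t : tree) : Prop :=
  match t with
  | Leaf => True
  | Node l r => bal l r <= 1 /\ max_balanced l /\ max_balanced r
  end.

(* One step of the GFB algorithm on a multiset (list up to permutation) of
   trees: remove a tree u of minimal size, then a tree v of minimal size among
   the remaining ones, and insert the tree with children u and v. *)
Inductive gfb_step : seq tree -> seq tree -> Prop :=
| GfbStep (s : seq tree) (u v : tree) (rest : seq tree) :
    Permutation s (u :: v :: rest) ->
    all (fun t => leaves u <= leaves t) (v :: rest) ->
    all (fun t => leaves v <= leaves t) rest ->
    gfb_step s (Node u v :: rest).

Inductive gfb_reach : seq tree -> seq tree -> Prop :=
| GfbRefl s : gfb_reach s s
| GfbTrans s1 s2 s3 : gfb_step s1 s2 -> gfb_reach s2 s3 -> gfb_reach s1 s3.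

(* t is a possible output of the GFB algorithm started on n single-node trees
   (any choice among ties is allowed). *)
Definition is_gfb (n : nat) (t : tree) : Prop := gfb_reach (nseq n Leaf) [:: t].

Definition root_na (t : tree) : nat :=
  match t with Leaf => 1 | Node l r => maxn (leaves l) (leaves r) end.
Definition root_nb (t : tree) : nat :=
  match t with Leaf => 0 | Node l r => minn (leaves l) (leaves r) end.

(* Main.v *)
Require Import Defs.
From mathcomp Require Import all_boot zify.
From Stdlib Require Import Permutation.

Set Implicit Arguments. Unset Strict Implicit.

Fixpoint cf (f n : nat) : nat :=
  match f with
  | 0 => 0
  | f'.+1 => if n <= 1 then 0 else
      if odd n then cf f' n./2 + cf f' (n./2).+1 + 1 else 2 * cf f' n./2
  end.
Definition c n := cf n n.

Lemma cf_indep f g n : n <= f -> n <= g -> cf f n = cf g n.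
Proof.
elim: f g n => [|f IH] [|g] n /= Hf Hg //.
- have -> : n = 0 by lia. by [].
- have -> : n = 0 by lia. by [].
case: ifP => // Hn; case: ifP => Ho.
- have := odd_double_half n; rewrite Ho => H.
  rewrite (IH g) ?(IH g (n./2).+1) //; lia.
- have := odd_double_half n; rewrite Ho => H.
  rewrite (IH g) //; lia.
Qed.

Lemma cf_S f n : cf f.+1 n = if n <= 1 then 0 else
      if odd n then cf f n./2 + cf f (n./2).+1 + 1 else 2 * cf f n./2.
Proof. by []. Qed.

Lemma c_unf n : 2 <= n -> c n = if odd n then c n./2 + c (n./2).+1 + 1 else 2 * c n./2.
Proof.
move=> Hn. rewrite /c.
have E : n = n.-1.+1 by lia.
rewrite {1}E cf_S ifF; last by lia.
have := odd_double_half n => H.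
case: ifP => Ho; move: H; rewrite Ho => H.
- congr (_ + _ + _); apply: cf_indep; lia.
- congr (2 * _); apply: cf_indep; lia.
Qed.

Lemma c0 : c 0 = 0. Proof. by []. Qed.
Lemma c1 : c 1 = 0. Proof. by []. Qed.
Lemma cE k : c (2 * k) = 2 * c k.
Proof.
case: k => [|k] //. rewrite c_unf; last by lia.
have Hodd : odd (2 * k.+1) = false by rewrite oddM.
have Hh : (2 * k.+1)./2 = k.+1 by rewrite mul2n doubleK.
by rewrite Hodd Hh.
Qed.
Lemma cO k : 1 <= k -> c (2 * k + 1) = c k + c (k+1) + 1.
Proof.
move=> Hk. rewrite c_unf; last by lia.
have Hodd : odd (2 * k + 1) = true by rewrite addn1 /= oddM.
have Hh : (2 * k + 1)./2 = k by rewrite addn1 /= mul2n uphalf_double.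
by rewrite Hodd Hh -(addn1 k).
Qed.
Unset Implicit Arguments.

Lemma par a : exists x, a = 2 * x \/ a = 2 * x + 1.
Proof.
exists a./2. have := odd_double_half a. case: (odd a) => /= H; lia.
Qed.

Ltac ih IH a b m := have := IH a b m ltac:(lia) ltac:(lia) ltac:(lia) ltac:(lia).

Lemma L1 n a b m : a + b = m -> m <= n -> 1 <= a -> 1 <= b ->
  c m <= c a + c b + ((a - b) + (b - a)).
Proof.
elim: n a b m => [|n IH] a b m Hm Hn Ha Hb; first lia.
have EO : forall a b m, a + b = m -> m <= n.+1 -> 1 <= a -> 1 <= b ->
   (exists x, a = 2 * x) -> (exists y, b = 2 * y + 1) ->
   c m <= c a + c b + ((a - b) + (b - a)).
  move=> {Ha Hb Hm Hn} a' b' m' Hm Hn Ha Hb [x Hx] [y Hy]; subst a' b' m'.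
  have -> : 2 * x + (2 * y + 1) = 2 * (x + y) + 1 by lia.
  rewrite cE cO; last by lia.
  case: (posnP y) => Hy.
  - subst y. rewrite ?muln0 ?add0n ?addn0 ?c1. ih IH x 1 (x + 1). rewrite ?c1 ?addn0. lia.
  - rewrite cO //. ih IH x y (x + y). ih IH x (y + 1) (x + y + 1). lia.
have [x [Hx|Hx]] := par a; have [y [Hy|Hy]] := par b.
- subst a b m. have -> : 2 * x + 2 * y = 2 * (x + y) by lia.
  rewrite !cE. ih IH x y (x + y). lia.
- apply: EO => //; [by exists x | by exists y].
- have H := EO b a m ltac:(lia) Hn Hb Ha (ex_intro _ y Hy) (ex_intro _ x Hx). lia.
- subst a b m. have -> : 2 * x + 1 + (2 * y + 1) = 2 * (x + y + 1) by lia.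
  rewrite cE.
  case: (posnP x) => Hx; case: (posnP y) => Hy.
  + subst. by [].
  + subst x. rewrite ?muln0 ?add0n ?addn0 ?c1 cO //. ih IH y 1 (y + 1). rewrite ?c1. lia.
  + subst y. rewrite ?muln0 ?add0n ?addn0 ?c1 cO //. ih IH x 1 (x + 1). rewrite ?c1. lia.
  + rewrite !cO //. ih IH x (y + 1) (x + y + 1). ih IH (x + 1) y (x + y + 1). lia.
Qed.

Ltac l1 a b m := have := L1 m a b m ltac:(lia) ltac:(lia) ltac:(lia) ltac:(lia).

Lemma L2 k a b m : a + b = m -> c a + c b + ((a - b) + (b - a)) = c m ->
  2 ^ k.+1 <= m -> m <= 2 ^ k.+2 -> 1 <= a -> 1 <= b ->
  (2 ^ k <= a /\ a <= 2 ^ k.+1) /\ (2 ^ k <= b /\ b <= 2 ^ k.+1).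
Proof.
elim: k a b m => [|k IH] a b m Hm He Hlo Hhi Ha Hb.
  have e0 : 2 ^ 0 = 1 by []. have e1 : 2 ^ 1 = 2 by []. have e2 : 2 ^ 2 = 4 by [].
  rewrite e0 e1 in Hlo Hhi *. rewrite e2 in Hhi.
  have : (a = 3 /\ b = 1) \/ (a = 1 /\ b = 3) \/ (a <= 2 /\ b <= 2) by lia.
  case=> [[? ?]|[[? ?]|?]]; [subst; by [] | subst; by [] | lia].
have HP : 1 <= 2 ^ k by rewrite expn_gt0.
rewrite !expnS in IH Hlo Hhi *.
have EO : forall a b m, a + b = m -> c a + c b + ((a - b) + (b - a)) = c m ->
  2 * (2 * 2 ^ k) <= m -> m <= 2 * (2 * (2 * 2 ^ k)) -> 1 <= a -> 1 <= b ->
   (exists x, a = 2 * x) -> (exists y, b = 2 * y + 1) ->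
  (2 * 2 ^ k <= a /\ a <= 2 * (2 * 2 ^ k)) /\ (2 * 2 ^ k <= b /\ b <= 2 * (2 * 2 ^ k)).
  move=> {Ha Hb Hm He Hlo Hhi} a' b' m' Hm He Hlo Hhi Ha Hb [x Hx] [y Hy]; subst a' b' m'.
  move: He. have -> : 2 * x + (2 * y + 1) = 2 * (x + y) + 1 by lia.
  rewrite cE (cO (k := x + y)); last by lia.
  case: (posnP y) => Hy.
  - subst y. rewrite ?muln0 ?add0n ?addn0 ?c1. l1 x 1 (x + 1). rewrite ?c1. lia.
  - rewrite cO // => He. l1 x y (x + y). l1 x (y + 1) (x + y + 1). move=> H1 H2.
    have E1 : c x + c y + ((x - y) + (y - x)) = c (x + y) by lia.
    have E2 : c x + c (y + 1) + ((x - (y + 1)) + ((y + 1) - x)) = c (x + y + 1) by lia.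
    have := IH x y (x + y) erefl E1 ltac:(lia) ltac:(lia) ltac:(lia) ltac:(lia).
    have := IH x (y + 1) (x + y + 1) ltac:(lia) E2 ltac:(lia) ltac:(lia) ltac:(lia) ltac:(lia).
    lia.
have [x [Hx|Hx]] := par a; have [y [Hy|Hy]] := par b.
- subst a b m. move: He. have -> : 2 * x + 2 * y = 2 * (x + y) by lia.
  rewrite !cE => He.
  have E1 : c x + c y + ((x - y) + (y - x)) = c (x + y) by lia.
  have := IH x y (x + y) erefl E1 ltac:(lia) ltac:(lia) ltac:(lia) ltac:(lia). lia.
- exact: (EO a b m Hm He Hlo Hhi Ha Hb (ex_intro _ x Hx) (ex_intro _ y Hy)).
- have H := EO b a m ltac:(lia) ltac:(lia) Hlo Hhi Hb Ha (ex_intro _ y Hy) (ex_intro _ x Hx). lia.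
- subst a b m. move: He. have -> : 2 * x + 1 + (2 * y + 1) = 2 * (x + y + 1) by lia.
  rewrite cE.
  case: (posnP x) => Hx; case: (posnP y) => Hy.
  + subst. lia.
  + subst x. rewrite ?muln0 ?add0n ?addn0 ?c1 cO //. l1 y 1 (y + 1). rewrite ?c1. lia.
  + subst y. rewrite ?muln0 ?add0n ?addn0 ?c1 cO //. l1 x 1 (x + 1). rewrite ?c1. lia.
  + rewrite !cO //. l1 x (y + 1) (x + y + 1). l1 (x + 1) y (x + y + 1). lia.
Qed.

Definition inr k (t : tree) := (2 ^ k <= leaves t) && (leaves t <= 2 ^ k.+1).
Definition np k (t : tree) := (leaves t != 2 ^ k) && (leaves t != 2 ^ k.+1).
Definition Inv (s : seq tree) := exists k, all (inr k) s /\ count (np k) s <= 1.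
Definition tot (s : seq tree) := sumn (map leaves s).

Lemma perm_count (p : pred tree) s t : Permutation s t -> count p s = count p t.
Proof. elim=> //= [x l l' _ -> | x y l | l l' l'' _ -> _ ->] //; lia. Qed.
Lemma perm_tot s t : Permutation s t -> tot s = tot t.
Proof. rewrite /tot. elim=> //= [x l l' _ -> | x y l | l l' l'' _ -> _ ->] //; lia. Qed.
Lemma perm_all (p : pred tree) s t : Permutation s t -> all p s = all p t.
Proof. elim=> //= [x l l' _ -> | x y l | l l' l'' _ -> _ ->] //.
by rewrite andbCA. Qed.

Lemma all_and (p q : pred tree) s : all p s -> all q s -> all (fun t => p t && q t) s.
Proof. elim: s => //= x s IH /andP [a b] /andP [c d]; rewrite a c /=; exact: IH. Qed.
Lemma count0_all (p : pred tree) s : count p s <= 0 -> all (predC p) s.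
Proof. elim: s => //= x s IH; case: (p x) => //= H; exact: IH. Qed.
Lemma all_count0 (p : pred tree) s : all (predC p) s -> count p s = 0.
Proof. elim: s => //= x s IH /andP [a b]; rewrite (negbTE a) /=; exact: IH. Qed.

Lemma step_inv s s' : gfb_step s s' -> Inv s -> Inv s' /\ tot s' = tot s.
Proof.
case=> s0 u v rest Hp Hu Hv [k [Ha Hc]].
rewrite (perm_all _ _ _ Hp) in Ha. rewrite (perm_count _ _ _ Hp) in Hc.
split; last by rewrite (perm_tot _ _ Hp) /tot /= addnA.
have Hcr : count (np k) rest <= 1 by move: Hc => /=; lia.
move: Ha Hc Hu Hv => /= /and3P [Hiu Hiv Har] Hc /andP [Huv Hur] Hvr.
move: Hiu Hiv; rewrite /inr /np in Hc Har * => /andP [Hu1 Hu2] /andP [Hv1 Hv2].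
have HP : 1 <= 2 ^ k by rewrite expn_gt0.
move: Hc Hu1 Hu2 Hv1 Hv2 Huv; rewrite !expnS.
set P := 2 ^ k => Hc Hu1 Hu2 Hv1 Hv2 Huv.
have [[Ex Ey]|Hne] : (leaves u = P /\ leaves v = P) \/ ~ (leaves u = P /\ leaves v = P) by lia.
- exists k; split.
  + apply/andP; split; last exact Har.
    rewrite /inr /= Ex Ey expnS -/P; apply/andP; lia.
  + have Hn : np k (Node u v) = false.
      rewrite /np /= Ex Ey expnS -/P; apply/negbTE/nandP; right; rewrite negbK; apply/eqP; lia.
    by rewrite /= Hn.
- have H1 : all (fun t => (leaves v <= leaves t) && ((P <= leaves t) && (leaves t <= 2 * P))) rest.
    apply: all_and => //. by move: Har; rewrite expnS.
  have Hr : all (fun t => leaves t == 2 * P) rest.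
    case: (ltngtP (leaves v) (2 * P)) => Hv; last 1 first. all: try lia.
    + apply: sub_all H1 => t /andP [a /andP [b d]]; apply/eqP; lia.
    + have Hnv : (leaves v != P) && (leaves v != 2 * P) by apply/andP; split; apply/eqP; lia.
      rewrite Hnv in Hc.
      have H2 : all (predC (fun t => (leaves t != P) && (leaves t != 2 * P))) rest.
        apply: count0_all; lia.
      have H3 := all_and _ _ _ H1 H2.
      apply: sub_all H3 => t /andP [/andP [a /andP [b d]]] /=.
      case: eqP => /= e1; case: eqP => /= e2 //; try (apply/eqP; lia); move=> _; lia.
  exists k.+1; split.
  + rewrite /= /inr !expnS -/P; apply/andP; split; first by rewrite /=; apply/andP; lia.
    apply: sub_all Hr => t /eqP e; apply/andP; lia.
  + rewrite /=.
    have -> : count (np k.+1) rest = 0.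
      apply: all_count0; apply: sub_all Hr => t /eqP e /=.
      rewrite /np e !expnS -/P; apply/nandP; left; rewrite negbK; apply/eqP; lia.
    by case: (np k.+1 _).
Qed.

Lemma reach_last s1 s3 : gfb_reach s1 s3 -> Inv s1 ->
  s1 = s3 \/ exists s2, Inv s2 /\ tot s2 = tot s1 /\ gfb_step s2 s3.
Proof.
elim=> [s|a b c' Hst Hr IH] Hinv; first by left.
have [Hi2 Ht2] := step_inv _ _ Hst Hinv.
right. case: (IH Hi2) => [<-|[s2' [Hi [Ht Hs]]]].
- by exists a.
- exists s2'; split => //; split => //; congruence.
Qed.

Lemma leaves_pos t : 1 <= leaves t.
Proof. elim: t => //= l Hl r Hr; lia. Qed.

Lemma mb_colless t : max_balanced t -> colless t = c (leaves t).
Proof.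
elim: t => //= l IHl r IHr [Hb [Hl Hr]].
rewrite IHl // IHr //. move: Hb; rewrite /bal => Hb.
have [x [Hx|Hx]] := par (leaves l + leaves r).
- have E1 : leaves l = x by lia. have E2 : leaves r = x by lia.
  rewrite Hx cE E1 E2; lia.
- have Hx1 : 1 <= x.
    have := leaves_pos l; have := leaves_pos r; lia.
  rewrite Hx cO //.
  have [[E1 E2]|[E1 E2]] : (leaves l = x /\ leaves r = x + 1) \/ (leaves l = x + 1 /\ leaves r = x) by lia.
  + rewrite E1 E2; lia.
  + rewrite E1 E2; lia.
Qed.

Lemma colless_ge t : c (leaves t) <= colless t.
Proof.
elim: t => //= l IHl r IHr. rewrite /bal.
have := L1 (leaves l + leaves r) (leaves l) (leaves r) (leaves l + leaves r) erefl (leqnn _) (leaves_pos l) (leaves_pos r).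
lia.
Qed.

Lemma inv_nseq n : Inv (nseq n Leaf) /\ tot (nseq n Leaf) = n.
Proof.
split.
- exists 0; split; first by elim: n.
  have -> : count (np 0) (nseq n Leaf) = 0 by elim: n.
  by [].
- rewrite /tot; elim: n => //= n ->; lia.
Qed.

Theorem corollary2 (n : nat) (T Tgfb Tmb : tree) :
  2 <= n ->
  leaves T = n -> colless_minimal T ->
  is_gfb n Tgfb ->
  leaves Tmb = n -> max_balanced Tmb ->
  root_na Tgfb >= root_na T /\ root_na T >= root_na Tmb /\
  root_nb Tgfb <= root_nb T /\ root_nb T <= root_nb Tmb.
Proof.
move=> Hn HT Hmin Hg HTmb Hmb.
have Hcm := mb_colless _ Hmb.
have Hle := Hmin Tmb ltac:(congruence).
case: Tmb HTmb Hmb Hcm Hle => [/= ?|l r HTmb Hmb Hcm Hle]; first lia.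
case: T HT Hmin Hle => [/= ?|a b HT Hmin Hle]; first lia.
move: Hmb => /= [Hbal _].
rewrite /= in HT HTmb.
have Ha := leaves_pos a; have Hb := leaves_pos b.
have Hca := colless_ge a; have Hcb := colless_ge b.
have HL1 := L1 n (leaves a) (leaves b) n HT (leqnn _) Ha Hb.
move: Hle Hcm Hbal; rewrite /= /bal HTmb => Hle Hcm Hbal.
have He : c (leaves a) + c (leaves b) + ((leaves a - leaves b) + (leaves b - leaves a)) = c n by lia.
have [Hi Ht] := inv_nseq n.
case: (reach_last _ _ Hg Hi) => [Heq|[s2 [Hi2 [Ht2 Hs]]]].
  have := congr1 size Heq; rewrite size_nseq /=; lia.
inversion Hs; subst.
rename H1 into Hp.
move: Hi2 => [k [Hall Hc]].
rewrite (perm_all _ _ _ Hp) /= /inr in Hall.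
rewrite (perm_count _ _ _ Hp) /= /np in Hc.
rewrite Ht (perm_tot _ _ Hp) /tot /= in Ht2.
move: Hall => /and3P [/andP [Hu1 Hu2] /andP [Hv1 Hv2] _].
have HP : 1 <= 2 ^ k by rewrite expn_gt0.
move: Hc Hu1 Hu2 Hv1 Hv2; rewrite !expnS => Hc Hu1 Hu2 Hv1 Hv2.
have := L2 k (leaves a) (leaves b) _ erefl He ltac:(rewrite !expnS; lia) ltac:(rewrite !expnS; lia) Ha Hb.
rewrite !expnS => HL2.
rewrite /=.
move: Hc.
case: (leaves u =P 2 ^ k); case: (leaves u =P 2 * 2 ^ k); case: (leaves v =P 2 ^ k); case: (leaves v =P 2 * 2 ^ k);
  move=> /= *; lia.
Qed.
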